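(* Let $H$ be a reduced double-well type potential and $h$ its Peierls barrier. Then \begin{enumerate} \item $h(0^\infty,x)=0$ for all $x\in[0]$ (in particular $h(0^\infty,0^\infty)=0$); \item $h(0^\infty,x)=\inf_{k\ge n}H_k^0$ for all $x\in[1^n0]$, $n\ge1$; in particular $h(0^\infty,1^\infty)=H_\infty^0$; \item $\liminf_{x\to0^\infty,\,x\neq 0^\infty}h(x,0^\infty)=H_{min}^0+H_\infty^1$; \item $h(1^\infty,x)=0$ for all $x\in[1]$ (in particular $h(1^\infty,1^\infty)=0$); \item $h(1^\infty,x)=\inf_{k\ge n}H_k^1$ for all $x\in[0^n1]$, $n\ge1$; in particular $h(1^\infty,0^\infty)=H_\infty^1$; \item $\liminf_{x\to1^\infty,\,x\neq1^\infty}h(x,1^\infty)=H_{min}^1+H_\infty^0$. \end{enumerate}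
   Context: $\Sigma:=\{0,1\}^{\mathbb N}$, $\sigma$ the left shift, cylinders $[i_0\dots i_{n-1}]$; $x\stackrel{n}{=}y$ means $x_j=y_j$ for $0\le j<n$; $\mathrm{var}(H,n):=\sup\{|H(x)-H(y)|:x\stackrel{n}{=}y\}$. A reduced double-well type potential is a continuous nonnegative $H:\Sigma\to\mathbb R$ with $\sum_n\mathrm{var}(H,n)<\infty$ such that $H=0$ on $[00]\cup[11]$, $H=H_n^0>0$ on $[01^n0]$, $H=H_n^1>0$ on $[10^n1]$ for $n\ge1$, and $\sum_{k\ge1}\sup_{n\ge0}|H_k^i-H_{k+n}^i|<\infty$ ($i=0,1$). Set $H_\infty^i:=\lim_nH_n^i$, $H_{min}^i:=\inf_{n\ge1}H_n^i$. $\bar H:=\lim_{n}\inf_{x}\frac1n\sum_{k=0}^{n-1}H(\sigma^kx)$ (here $\bar H=0$). Peierls barrier: $h(x,y):=\lim_{p\to\infty}\lim_{n\to\infty}S_n^p(x,y)$, $S_n^p(x,y):=\inf\{\sum_{i=0}^{k-1}[H(\sigma^iz)-\bar H]:k\ge n,\ z\stackrel{p}{=}x,\ \sigma^k(z)\stackrel{p}{=}y\}$. *)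

(* Defs.v *)
From Stdlib Require Import Reals Lra ClassicalEpsilon.
Open Scope R_scope.

Inductive Rbar : Type := Finite (r : R) | p_infty | m_infty.

Definition Rbar_le (x y : Rbar) : Prop :=
  match x, y with
  | m_infty, _ => True
  | _, p_infty => True
  | p_infty, _ => False
  | _, m_infty => False
  | Finite a, Finite b => a <= b
  end.

Definition Rbar_plus (x y : Rbar) : Rbar :=
  match x, y with
  | Finite a, Finite b => Finite (a + b)
  | p_infty, m_infty | m_infty, p_infty => Finite 0 (* undefined case, unused *)
  | p_infty, _ | _, p_infty => p_infty
  | m_infty, _ | _, m_infty => m_infty
  end.

Definition is_glb_Rbar (E : Rbar -> Prop) (l : Rbar) : Prop :=
  (forall x, E x -> Rbar_le l x) /\
  (forall m, (forall x, E x -> Rbar_le m x) -> Rbar_le m l).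
Definition is_lub_Rbar (E : Rbar -> Prop) (l : Rbar) : Prop :=
  (forall x, E x -> Rbar_le x l) /\
  (forall m, (forall x, E x -> Rbar_le x m) -> Rbar_le l m).

Definition Rbar_inf (E : Rbar -> Prop) : Rbar :=
  epsilon (inhabits m_infty) (is_glb_Rbar E).
Definition Rbar_sup (E : Rbar -> Prop) : Rbar :=
  epsilon (inhabits p_infty) (is_lub_Rbar E).

Definition is_lim_Rbar (u : nat -> Rbar) (l : Rbar) : Prop :=
  match l with
  | Finite a => forall eps, 0 < eps -> exists N, forall n, (N <= n)%nat ->
                  exists r, u n = Finite r /\ Rabs (r - a) < eps
  | p_infty => forall M, exists N, forall n, (N <= n)%nat ->
                  Rbar_le (Finite M) (u n) /\ u n <> Finite M
  | m_infty => forall M, exists N, forall n, (N <= n)%nat ->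
                  Rbar_le (u n) (Finite M) /\ u n <> Finite M
  end.
Definition Lim (u : nat -> Rbar) : Rbar :=
  epsilon (inhabits p_infty) (is_lim_Rbar u).

Definition real_part (x : Rbar) : R :=
  match x with Finite r => r | _ => 0 end.

Definition summable (v : nat -> R) : Prop :=
  exists l, Un_cv (fun N => sum_f_R0 v N) l.

Fixpoint sumk (g : nat -> R) (k : nat) : R :=
  match k with O => 0 | S k' => sumk g k' + g k' end.

Definition Sigma := nat -> bool.          (* false = 0, true = 1 *)
Definition shiftn (k : nat) (x : Sigma) : Sigma := fun j => x (k + j)%nat.
Definition agree (n : nat) (x y : Sigma) : Prop :=
  forall j, (j < n)%nat -> x j = y j.
Definition zeros : Sigma := fun _ => false.
Definition ones  : Sigma := fun _ => true.

Definition continuous_Sigma (H : Sigma -> R) : Prop :=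
  forall x eps, 0 < eps -> exists n, forall y, agree n x y -> Rabs (H x - H y) < eps.

Definition var (H : Sigma -> R) (n : nat) : Rbar :=
  Rbar_sup (fun r => exists x y, agree n x y /\ r = Finite (Rabs (H x - H y))).

Definition tail_osc (Hs : nat -> R) (k : nat) : Rbar :=
  Rbar_sup (fun r => exists n, r = Finite (Rabs (Hs k - Hs (k + n)%nat))).

(* reduced double-well type potential, with H = Hs0 n on [0 1^n 0], H = Hs1 n on [1 0^n 1] *)
Definition reduced_double_well (H : Sigma -> R) (Hs0 Hs1 : nat -> R) : Prop :=
  continuous_Sigma H /\
  (forall x, 0 <= H x) /\
  (exists v : nat -> R, (forall n, var H n = Finite (v n)) /\ summable v) /\
  (forall x, x 0%nat = x 1%nat -> H x = 0) /\
  (forall n x, (1 <= n)%nat -> x 0%nat = false ->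
     (forall j, (1 <= j <= n)%nat -> x j = true) -> x (S n) = false -> H x = Hs0 n) /\
  (forall n x, (1 <= n)%nat -> x 0%nat = true ->
     (forall j, (1 <= j <= n)%nat -> x j = false) -> x (S n) = true -> H x = Hs1 n) /\
  (forall n, (1 <= n)%nat -> 0 < Hs0 n) /\
  (forall n, (1 <= n)%nat -> 0 < Hs1 n) /\
  (exists v : nat -> R, (forall k, (1 <= k)%nat -> tail_osc Hs0 k = Finite (v k)) /\
                        summable (fun k => v (S k))) /\
  (exists v : nat -> R, (forall k, (1 <= k)%nat -> tail_osc Hs1 k = Finite (v k)) /\
                        summable (fun k => v (S k))).

Definition H_infty (Hs : nat -> R) : Rbar := Lim (fun n => Finite (Hs n)).
Definition H_min (Hs : nat -> R) : Rbar :=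
  Rbar_inf (fun r => exists n, (1 <= n)%nat /\ r = Finite (Hs n)).
Definition H_inf_from (Hs : nat -> R) (n : nat) : Rbar :=
  Rbar_inf (fun r => exists k, (n <= k)%nat /\ r = Finite (Hs k)).

(* Hbar = lim_n inf_x (1/n) sum_{k<n} H(sigma^k x)  (indexed by n+1 to avoid n = 0) *)
Definition Hbar (H : Sigma -> R) : R :=
  real_part (Lim (fun n => Rbar_inf (fun r => exists x,
     r = Finite (sumk (fun k => H (shiftn k x)) (S n) / INR (S n))))).

Definition S_np (H : Sigma -> R) (n p : nat) (x y : Sigma) : Rbar :=
  Rbar_inf (fun r => exists k z, (n <= k)%nat /\ agree p z x /\ agree p (shiftn k z) y /\
       r = Finite (sumk (fun i => H (shiftn i z) - Hbar H) k)).

Definition peierls (H : Sigma -> R) (x y : Sigma) : Rbar :=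
  Lim (fun p => Lim (fun n => S_np H n p x y)).

(* liminf_{x -> a, x <> a} f x  (cylinders [a_0...a_{m-1}] as neighbourhood basis) *)
Definition liminf_punct (f : Sigma -> Rbar) (a : Sigma) : Rbar :=
  Rbar_sup (fun r => exists m, r = Rbar_inf (fun s => exists x, agree m x a /\ x <> a /\ s = f x)).

(* Main.v *)
Require Import Defs.
From Stdlib Require Import Reals Lra Lia ClassicalEpsilon Classical FunctionalExtensionality PropExtensionality Bool.
Open Scope R_scope.

Lemma Rbar_le_refl x : Rbar_le x x.
Proof. destruct x; simpl; auto; lra. Qed.

Lemma Rbar_le_trans x y z : Rbar_le x y -> Rbar_le y z -> Rbar_le x z.
Proof. destruct x, y, z; simpl; auto; try lra; tauto. Qed.

Lemma Rbar_le_antisym x y : Rbar_le x y -> Rbar_le y x -> x = y.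
Proof. destruct x, y; simpl; intros; try tauto; f_equal; lra. Qed.

Lemma glb_unique E l1 l2 : is_glb_Rbar E l1 -> is_glb_Rbar E l2 -> l1 = l2.
Proof. intros [A B] [C D]. apply Rbar_le_antisym; auto. Qed.

Lemma lub_unique E l1 l2 : is_lub_Rbar E l1 -> is_lub_Rbar E l2 -> l1 = l2.
Proof. intros [A B] [C D]. apply Rbar_le_antisym; auto. Qed.

Lemma glb_exists E : exists l, is_glb_Rbar E l.
Proof.
  destruct (classic (E m_infty)) as [Hm|Hm].
  { exists m_infty. split; [intros; simpl; auto|]. intros m Hmm. apply Hmm; auto. }
  destruct (classic (exists r, E (Finite r))) as [[r0 Hr0]|Hne].
  - destruct (classic (exists lb, forall r, E (Finite r) -> lb <= r)) as [[lb Hlb]|Hnb].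
    + set (F := fun y => E (Finite (- y))).
      assert (Hb : bound F). { exists (- lb). intros y Hy. unfold F in Hy. specialize (Hlb _ Hy). lra. }
      assert (Hex : exists y, F y). { exists (- r0). unfold F. rewrite Ropp_involutive. auto. }
      destruct (completeness F Hb Hex) as [s [Hs1 Hs2]].
      exists (Finite (- s)). split.
      * intros x Hx. destruct x as [r| |]; simpl; auto.
        assert (F (- r)) by (unfold F; rewrite Ropp_involutive; auto).
        specialize (Hs1 _ H). lra.
      * intros m Hm'. destruct m as [r| |]; simpl; auto.
        -- assert (forall y, F y -> y <= - r).
           { intros y Hy. specialize (Hm' _ Hy). simpl in Hm'. lra. }
           specialize (Hs2 _ H). lra.
        -- specialize (Hm' _ Hr0). simpl in Hm'. auto.
    + exists m_infty. split; [intros; simpl; auto|].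
      intros m Hm'. destruct m as [r| |]; simpl; auto.
      * exfalso. apply Hnb. exists r. intros r' Hr'. specialize (Hm' _ Hr'). simpl in Hm'. auto.
      * specialize (Hm' _ Hr0). simpl in Hm'. auto.
  - exists p_infty. split.
    + intros x Hx. destruct x; simpl; auto. exfalso; apply Hne; eauto. 
    + intros m _. destruct m; simpl; auto.
Qed.

Lemma Rbar_inf_glb E : is_glb_Rbar E (Rbar_inf E).
Proof.
  unfold Rbar_inf. apply epsilon_spec. apply glb_exists.
Qed.

Lemma Rbar_inf_lb E x : E x -> Rbar_le (Rbar_inf E) x.
Proof. intros. apply (proj1 (Rbar_inf_glb E)); auto. Qed.

Lemma Rbar_inf_ge E m : (forall x, E x -> Rbar_le m x) -> Rbar_le m (Rbar_inf E).
Proof. intros. apply (proj2 (Rbar_inf_glb E)); auto. Qed.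

Lemma Rbar_sup_eq E l : is_lub_Rbar E l -> Rbar_sup E = l.
Proof.
  intros Hl. unfold Rbar_sup. apply (lub_unique E); auto.
  apply epsilon_spec. eauto.
Qed.

Lemma lim_unique u l1 l2 : is_lim_Rbar u l1 -> is_lim_Rbar u l2 -> l1 = l2.
Proof.
  intros H1 H2.
  destruct l1 as [a| |], l2 as [b| |]; simpl in H1, H2.
  - f_equal. destruct (Req_dec a b) as [|Hab]; auto. exfalso.
    set (e := Rabs (a - b) / 2).
    assert (He : 0 < e). { unfold e. assert (0 < Rabs (a-b)) by (apply Rabs_pos_lt; lra). lra. }
    destruct (H1 e He) as [N1 HN1]. destruct (H2 e He) as [N2 HN2].
    destruct (HN1 (N1+N2)%nat ltac:(lia)) as [r1 [E1 R1]].
    destruct (HN2 (N1+N2)%nat ltac:(lia)) as [r2 [E2 R2]].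
    rewrite E1 in E2. injection E2 as <-.
    assert (Rabs (a - b) <= Rabs (r1 - a) + Rabs (r1 - b)).
    { replace (a - b) with (-(r1 - a) + (r1 - b)) by ring.
      eapply Rle_trans; [apply Rabs_triang|]. rewrite Rabs_Ropp. lra. }
    unfold e in *. lra.
  - exfalso. destruct (H1 1 ltac:(lra)) as [N1 HN1]. destruct (H2 (a+1)) as [N2 HN2].
    destruct (HN1 (N1+N2)%nat ltac:(lia)) as [r1 [E1 R1]].
    destruct (HN2 (N1+N2)%nat ltac:(lia)) as [L _]. rewrite E1 in L. simpl in L.
    apply Rabs_def2 in R1. lra.
  - exfalso. destruct (H1 1 ltac:(lra)) as [N1 HN1]. destruct (H2 (a-1)) as [N2 HN2].
    destruct (HN1 (N1+N2)%nat ltac:(lia)) as [r1 [E1 R1]].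
    destruct (HN2 (N1+N2)%nat ltac:(lia)) as [L _]. rewrite E1 in L. simpl in L.
    apply Rabs_def2 in R1. lra.
  - exfalso. destruct (H2 1 ltac:(lra)) as [N1 HN1]. destruct (H1 (b+1)) as [N2 HN2].
    destruct (HN1 (N1+N2)%nat ltac:(lia)) as [r1 [E1 R1]].
    destruct (HN2 (N1+N2)%nat ltac:(lia)) as [L _]. rewrite E1 in L. simpl in L.
    apply Rabs_def2 in R1. lra.
  - auto.
  - exfalso. destruct (H1 0) as [N1 HN1]. destruct (H2 0) as [N2 HN2].
    destruct (HN1 (N1+N2)%nat ltac:(lia)) as [L1 D1].
    destruct (HN2 (N1+N2)%nat ltac:(lia)) as [L2 D2].
    destruct (u (N1+N2)%nat); simpl in *; auto. apply D1. f_equal. lra.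
  - exfalso. destruct (H2 1 ltac:(lra)) as [N1 HN1]. destruct (H1 (b-1)) as [N2 HN2].
    destruct (HN1 (N1+N2)%nat ltac:(lia)) as [r1 [E1 R1]].
    destruct (HN2 (N1+N2)%nat ltac:(lia)) as [L _]. rewrite E1 in L. simpl in L.
    apply Rabs_def2 in R1. lra.
  - exfalso. destruct (H1 0) as [N1 HN1]. destruct (H2 0) as [N2 HN2].
    destruct (HN1 (N1+N2)%nat ltac:(lia)) as [L1 D1].
    destruct (HN2 (N1+N2)%nat ltac:(lia)) as [L2 D2].
    destruct (u (N1+N2)%nat); simpl in *; auto. apply D1. f_equal. lra.
  - auto.
Qed.

Lemma Lim_eq u l : is_lim_Rbar u l -> Lim u = l.
Proof.
  intros Hl. unfold Lim. apply (lim_unique u); auto. apply epsilon_spec. eauto.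
Qed.

Lemma mono_le u : (forall n, Rbar_le (u n) (u (S n))) -> forall n m, (n <= m)%nat -> Rbar_le (u n) (u m).
Proof.
  intros Hu n m Hnm. induction Hnm. apply Rbar_le_refl. eapply Rbar_le_trans; eauto.
Qed.

Lemma mono_conv u : (forall n, Rbar_le (u n) (u (S n))) -> (forall n, Rbar_le (Finite 0) (u n)) ->
  (forall n, Rbar_le (u n) (Lim u)) /\ (forall B, (forall n, Rbar_le (u n) B) -> Rbar_le (Lim u) B).
Proof.
  intros Hu H0.
  pose proof (mono_le u Hu) as Hm.
  destruct (classic (exists n0, u n0 = p_infty)) as [[n0 Hn0]|Hnp].
  - assert (Hl : Lim u = p_infty).
    { apply Lim_eq. simpl. intros M. exists n0. intros n Hn.
      specialize (Hm _ _ Hn). rewrite Hn0 in Hm. destruct (u n); simpl in *; try tauto.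
      split; auto; discriminate. }
    rewrite Hl. split. intros n; destruct (u n); simpl; auto.
    intros B HB. specialize (HB n0). rewrite Hn0 in HB. destruct B; simpl in *; tauto.
  - assert (Hf : forall n, u n = Finite (real_part (u n))).
    { intros n. specialize (H0 n). destruct (u n) eqn:E; simpl in *; auto; try tauto.
      exfalso; apply Hnp; eauto. }
    set (r := fun n => real_part (u n)).
    assert (Hr : forall n m, (n <= m)%nat -> r n <= r m).
    { intros n m Hnm. specialize (Hm _ _ Hnm). rewrite (Hf n), (Hf m) in Hm. exact Hm. }
    destruct (classic (exists M, forall n, r n <= M)) as [[M HM]|Hnb].
    + set (F := fun y => exists n, y = r n).
      assert (Hb : bound F). { exists M. intros y [n ->]. auto. }
      destruct (completeness F Hb (ex_intro _ (r 0%nat) (ex_intro _ 0%nat eq_refl))) as [s [Hs1 Hs2]].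
      assert (Hl : Lim u = Finite s).
      { apply Lim_eq. simpl. intros eps Heps.
        destruct (classic (exists n0, s - eps < r n0)) as [[n0 Hn0]|Hno].
        - exists n0. intros n Hn. exists (r n). split. apply Hf.
          assert (r n <= s) by (apply Hs1; exists n; auto).
          specialize (Hr _ _ Hn). apply Rabs_def1; lra.
        - exfalso. assert (s <= s - eps); [|lra]. apply Hs2. intros y [n ->].
          apply Rnot_lt_le. intro. apply Hno; eauto. }
      rewrite Hl. split.
      * intros n. rewrite Hf. simpl. apply Hs1. exists n; auto.
      * intros B HB. destruct B as [b| |]; simpl; auto.
        -- apply Hs2. intros y [n ->]. specialize (HB n). rewrite Hf in HB. exact HB.
        -- specialize (HB 0%nat). rewrite Hf in HB. exact HB.
    + assert (Hl : Lim u = p_infty).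
      { apply Lim_eq. simpl. intros M.
        destruct (classic (exists n0, M < r n0)) as [[n0 Hn0]|Hno].
        - exists n0. intros n Hn. rewrite Hf. specialize (Hr _ _ Hn). simpl. split. fold (r n). lra.
          intro E. injection E. fold (r n). lra.
        - exfalso. apply Hnb. exists M. intros n. apply Rnot_lt_le. intro. apply Hno; eauto. }
      rewrite Hl. split. intros n; destruct (u n); simpl; auto.
      intros B HB. destruct B as [b| |]; simpl; auto.
      * apply Hnb. exists b. intros n. specialize (HB n). rewrite Hf in HB. exact HB.
      * specialize (HB 0%nat). rewrite Hf in HB. exact HB.
Qed.

Lemma inf_mono (E E' : Rbar -> Prop) : (forall e, E' e -> E e) -> Rbar_le (Rbar_inf E) (Rbar_inf E').
Proof. intros. apply Rbar_inf_ge. intros. apply Rbar_inf_lb; auto. Qed.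

Lemma S_mono_n H n p x y : Rbar_le (S_np H n p x y) (S_np H (S n) p x y).
Proof.
  apply inf_mono. intros e (k & z & Hk & A & B & C). exists k, z. repeat split; auto; lia.
Qed.

Lemma S_mono_p H n p x y : Rbar_le (S_np H n p x y) (S_np H n (S p) x y).
Proof.
  apply inf_mono. intros e (k & z & Hk & A & B & C). exists k, z. repeat split; auto.
  intros j Hj; apply A; lia. intros j Hj; apply B; lia.
Qed.

Lemma peierls_bounds H x y :
  (forall n p, Rbar_le (Finite 0) (S_np H n p x y)) ->
  (forall B, (exists P, forall p n, (P <= p)%nat -> Rbar_le (S_np H n p x y) B) -> Rbar_le (peierls H x y) B) /\
  (forall B, (exists P, forall p, (P <= p)%nat -> exists N, forall n, (N <= n)%nat -> Rbar_le B (S_np H n p x y)) -> Rbar_le B (peierls H x y)).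
Proof.
  intros H0.
  set (l := fun p => Lim (fun n => S_np H n p x y)).
  assert (Hl : forall p, (forall n, Rbar_le (S_np H n p x y) (l p)) /\
     (forall B, (forall n, Rbar_le (S_np H n p x y) B) -> Rbar_le (l p) B)).
  { intros p. apply mono_conv. intros; apply S_mono_n. auto. }
  assert (Hlm : forall p, Rbar_le (l p) (l (S p))).
  { intros p. apply (proj2 (Hl p)). intros n. eapply Rbar_le_trans. apply S_mono_p. apply (proj1 (Hl (S p))). }
  assert (Hl0 : forall p, Rbar_le (Finite 0) (l p)).
  { intros p. eapply Rbar_le_trans. apply (H0 0%nat p). apply (proj1 (Hl p)). }
  pose proof (mono_conv l Hlm Hl0) as [P1 P2].
  unfold peierls. fold l. split.
  - intros B [P HP]. apply P2. intros p.
    eapply Rbar_le_trans. apply (mono_le l Hlm p (p + P)). lia.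
    apply (proj2 (Hl _)). intros n. apply HP. lia.
  - intros B [P HP]. destruct (HP P (le_n _)) as [N HN].
    eapply Rbar_le_trans. apply (HN N (le_n _)).
    eapply Rbar_le_trans. apply (proj1 (Hl P)). apply P1.
Qed.

Lemma sumk_ext g g' k : (forall i, (i < k)%nat -> g i = g' i) -> sumk g k = sumk g' k.
Proof. induction k; simpl; intros; auto. rewrite IHk by (intros; apply H; lia). rewrite H by lia; auto. Qed.

Lemma sumk_nonneg g k : (forall i, (i < k)%nat -> 0 <= g i) -> 0 <= sumk g k.
Proof. induction k; simpl; intros. lra. assert (0 <= g k) by (apply H; lia).
  assert (0 <= sumk g k) by (apply IHk; intros; apply H; lia). lra. Qed.

Lemma sumk_zero g k : (forall i, (i < k)%nat -> g i = 0) -> sumk g k = 0.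
Proof. induction k; simpl; intros. lra. rewrite IHk by (intros; apply H; lia). rewrite H by lia. lra. Qed.

Lemma sumk_one g k a : (forall i, (i < k)%nat -> i <> a -> g i = 0) -> (a < k)%nat -> sumk g k = g a.
Proof. induction k; simpl; intros. lia.
  destruct (Nat.eq_dec a k) as [->|Hne].
  - rewrite sumk_zero by (intros; apply H; lia). lra.
  - rewrite IHk by (intros; try apply H; lia). rewrite (H k) by lia. lra. Qed.

Lemma sumk_two g k a c : (forall i, (i < k)%nat -> i <> a -> i <> c -> g i = 0) -> (a < k)%nat -> (c < k)%nat -> a <> c ->
  sumk g k = g a + g c.
Proof. induction k; simpl; intros. lia.
  destruct (Nat.eq_dec a k) as [->|Hne].
  - rewrite (sumk_one g k c) by (intros; try apply H; lia). lra.
  - destruct (Nat.eq_dec c k) as [->|Hne2].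
    + rewrite (sumk_one g k a) by (intros; try apply H; lia). lra.
    + rewrite IHk by (intros; try apply H; lia). rewrite (H k) by lia. lra. Qed.

Lemma sumk_ge1 g k a : (forall i, (i < k)%nat -> 0 <= g i) -> (a < k)%nat -> g a <= sumk g k.
Proof. induction k; simpl; intros. lia.
  destruct (Nat.eq_dec a k) as [->|Hne].
  - assert (0 <= sumk g k) by (apply sumk_nonneg; intros; apply H; lia). lra.
  - assert (g a <= sumk g k) by (apply IHk; intros; try apply H; lia). assert (0 <= g k) by (apply H; lia). lra. Qed.

Lemma sumk_ge2 g k a c : (forall i, (i < k)%nat -> 0 <= g i) -> (a < k)%nat -> (c < k)%nat -> a <> c ->
  g a + g c <= sumk g k.
Proof. induction k; simpl; intros. lia.
  destruct (Nat.eq_dec a k) as [->|Hne].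
  - assert (g c <= sumk g k) by (apply sumk_ge1; intros; try apply H; lia). lra.
  - destruct (Nat.eq_dec c k) as [->|Hne2].
    + assert (g a <= sumk g k) by (apply sumk_ge1; intros; try apply H; lia). lra.
    + assert (g a + g c <= sumk g k) by (apply IHk; intros; try apply H; lia). assert (0 <= g k) by (apply H; lia). lra. Qed.

Lemma first_change (z : Sigma) b s d : z s = b -> z (s + d)%nat = negb b ->
  exists e, (s < e <= s + d)%nat /\ z e = negb b /\ forall i, (s <= i < e)%nat -> z i = b.
Proof.
  revert s. induction d; intros s Hs Hd.
  - rewrite Nat.add_0_r, Hs in Hd. destruct b; discriminate.
  - destruct (bool_dec (z (S s)) b) as [E|E].
    + destruct (IHd (S s) E) as (e & He & Ze & Hi). replace (S s + d)%nat with (s + S d)%nat by lia. auto.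
      exists e. repeat split; try lia; auto. intros i Hi'. destruct (Nat.eq_dec i s) as [->|]; auto. apply Hi; lia.
    + exists (S s). repeat split; try lia. destruct (z (S s)), b; simpl in *; congruence.
      intros i Hi. replace i with s by lia. auto.
Qed.

Lemma last_before (z : Sigma) b s d : z s = b ->
  exists a, (s <= a <= s + d)%nat /\ z a = b /\ forall i, (a < i <= s + d)%nat -> z i = negb b.
Proof.
  intros Hs. induction d.
  - exists s. repeat split; try lia; auto; intros; lia.
  - destruct (bool_dec (z (s + S d)%nat) b) as [E|E].
    + exists (s + S d)%nat. repeat split; try lia; auto; intros; lia.
    + destruct IHd as (a & Ha & Za & Hi). exists a. repeat split; try lia; auto.
      intros i Hi'. destruct (Nat.eq_dec i (s + S d)) as [->|].
      destruct (z (s + S d)%nat), b; simpl in *; congruence. apply Hi; lia.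
Qed.

Definition Hsb (Hs0 Hs1 : nat -> R) (b : bool) := if b then Hs1 else Hs0.
Definition cst (b : bool) : Sigma := fun _ => b.
Definition w (b : bool) : Sigma := fun i => match i with O => b | _ => negb b end.

Definition RD (H : Sigma -> R) (Hs0 Hs1 : nat -> R) : Prop :=
  continuous_Sigma H /\ (forall x, 0 <= H x) /\ (forall x, x 0%nat = x 1%nat -> H x = 0) /\
  (forall b n x, (1 <= n)%nat -> x 0%nat = b -> (forall j, (1 <= j <= n)%nat -> x j = negb b) ->
     x (S n) = b -> H x = Hsb Hs0 Hs1 b n) /\
  (forall b n, (1 <= n)%nat -> 0 < Hsb Hs0 Hs1 b n).

Lemma Hbar_zero H : (forall x, 0 <= H x) -> (forall x, x 0%nat = x 1%nat -> H x = 0) -> Hbar H = 0.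
Proof.
  intros Hn Hz. unfold Hbar.
  assert (E : forall n, Rbar_inf (fun r => exists x,
     r = Finite (sumk (fun k => H (shiftn k x)) (S n) / INR (S n))) = Finite 0).
  { intros n. apply Rbar_le_antisym.
    - apply Rbar_inf_lb. exists (cst false).
      rewrite sumk_zero. f_equal. unfold Rdiv; ring. intros; apply Hz; reflexivity.
    - apply Rbar_inf_ge. intros r [x ->]. simpl. apply Rmult_le_pos.
      apply (sumk_nonneg (fun k => H (shiftn k x)) (S n)); auto. left; apply Rinv_0_lt_compat, (lt_0_INR (S n)); lia. }
  rewrite (Lim_eq _ (Finite 0)). reflexivity.
  intros eps Heps. exists 0%nat. intros n _. exists 0. split; [apply E|].
  rewrite Rminus_0_r, Rabs_R0; auto.
Qed.

Lemma S_eqH H n p x y : Hbar H = 0 -> S_np H n p x y =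
  Rbar_inf (fun r => exists k z, (n <= k)%nat /\ agree p z x /\ agree p (shiftn k z) y /\
       r = Finite (sumk (fun i => H (shiftn i z)) k)).
Proof.
  intros Hb. unfold S_np. f_equal. apply functional_extensionality; intro r.
  apply propositional_extensionality. rewrite Hb.
  split; intros (k & z & A & B & C & D); exists k, z; repeat split; auto; rewrite D; f_equal;
  apply sumk_ext; intros; ring.
Qed.

Lemma eps_le x a : (forall eps, 0 < eps -> Rbar_le x (Finite (a + eps))) -> Rbar_le x (Finite a).
Proof. intros Hx. destruct x as [r| |]; simpl in *; auto.
  - apply Rnot_lt_le; intro. specialize (Hx ((r - a)/2) ltac:(lra)). lra.
  - apply (Hx 1); lra. Qed.

Lemma eps_ge x a : (forall eps, 0 < eps -> Rbar_le (Finite (a - eps)) x) -> Rbar_le (Finite a) x.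
Proof. intros Hx. destruct x as [r| |]; simpl in *; auto.
  - apply Rnot_lt_le; intro. specialize (Hx ((a - r)/2) ltac:(lra)). lra.
  - apply (Hx 1); lra. Qed.

Lemma RD_flat H Hs0 Hs1 : RD H Hs0 Hs1 -> forall z a, z a = z (S a) -> H (shiftn a z) = 0.
Proof. intros (Hc & Hn & Hz & Hb & Hp) z a E. apply Hz. unfold shiftn.
  rewrite Nat.add_0_r, Nat.add_1_r. auto. Qed.

Lemma RD_blk H Hs0 Hs1 : RD H Hs0 Hs1 -> forall b z a j, (1 <= j)%nat -> z a = b ->
  (forall i, (a < i <= a + j)%nat -> z i = negb b) -> z (a + j + 1)%nat = b ->
  H (shiftn a z) = Hsb Hs0 Hs1 b j.
Proof. intros (Hc & Hn & Hz & Hb & Hp) b z a j Hj Za Hi Ze. apply Hb; auto; unfold shiftn.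
  rewrite Nat.add_0_r; auto. intros j' Hj'. apply Hi; lia.
  replace (a + S j)%nat with (a + j + 1)%nat by lia. auto. Qed.

Lemma RD_lim H Hs0 Hs1 : RD H Hs0 Hs1 -> forall b, Un_cv (Hsb Hs0 Hs1 b) (H (w b)).
Proof.
  intros RR b. pose proof RR as (Hc & Hn & Hz & Hb & Hp).
  intros eps Heps. destruct (Hc (w b) eps Heps) as [N HN]. exists (S N). intros n Hnn.
  set (y := fun i => if (i =? 0)%nat then b else if (i <=? n)%nat then negb b else b).
  assert (Hy : H y = Hsb Hs0 Hs1 b n).
  { apply Hb; try lia; unfold y.
    - reflexivity.
    - intros j Hj. destruct (Nat.eqb_spec j 0); [lia|]. destruct (Nat.leb_spec j n); auto; lia.
    - destruct (Nat.eqb_spec (S n) 0); [lia|]. destruct (Nat.leb_spec (S n) n); auto; lia. }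
  assert (Ha : agree N (w b) y).
  { intros i Hi. unfold w, y. destruct (Nat.eqb_spec i 0) as [->|]; auto.
    destruct i; [lia|]. destruct (Nat.leb_spec (S i) n); auto; lia. }
  specialize (HN y Ha). rewrite Hy in HN. unfold R_dist. rewrite Rabs_minus_sym. auto.
Qed.

Lemma RD_tail H Hs0 Hs1 : RD H Hs0 Hs1 -> forall b z a, z a = b -> (forall i, (a < i)%nat -> z i = negb b) ->
  H (shiftn a z) = H (w b).
Proof. intros RR b z a Za Hi. f_equal. apply functional_extensionality. intros i.
  unfold shiftn, w. destruct i. rewrite Nat.add_0_r; auto. apply Hi; lia. Qed.

Lemma tail_bound H Hs0 Hs1 : RD H Hs0 Hs1 -> forall b z a p, (1 <= p)%nat -> z a = b ->
  (forall i, (a < i <= a + p)%nat -> z i = negb b) ->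
  H (shiftn a z) = H (w b) \/ exists j, (p <= j)%nat /\ H (shiftn a z) = Hsb Hs0 Hs1 b j.
Proof.
  intros RR b z a p Hp Za Hi.
  destruct (classic (exists e, (a < e)%nat /\ z e = b)) as [[e [He Ze]]|Hno].
  - right. assert (Z1 : z (S a) = negb b) by (apply Hi; lia).
    destruct (first_change z (negb b) (S a) (e - S a) Z1) as (e' & He' & Ze' & Hi').
    replace (S a + (e - S a))%nat with e by lia. rewrite negb_involutive; auto.
    rewrite negb_involutive in Ze'.
    assert (a + p < e')%nat.
    { destruct (Nat.lt_ge_cases (a + p) e') as [|Hle]; auto.
      rewrite Hi in Ze' by lia. destruct b; discriminate. }
    exists (e' - a - 1)%nat. split. lia.
    apply (RD_blk H Hs0 Hs1 RR b z a); auto. lia.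
    intros i Hi2. apply Hi'. lia. replace (a + (e' - a - 1) + 1)%nat with e' by lia. auto.
  - left. apply (RD_tail H Hs0 Hs1 RR); auto. intros i Hai.
    destruct (bool_dec (z i) b). exfalso; apply Hno; eauto. destruct (z i), b; simpl in *; congruence.
Qed.

Lemma RD_Hbar H Hs0 Hs1 : RD H Hs0 Hs1 -> Hbar H = 0.
Proof. intros (Hc & Hn & Hz & Hb & Hp). apply Hbar_zero; auto. Qed.

Lemma RD_Snn H Hs0 Hs1 : RD H Hs0 Hs1 -> forall n p x y, Rbar_le (Finite 0) (S_np H n p x y).
Proof. intros RR n p x y. pose proof RR as (Hc & Hn & Hz & Hb & Hp).
  rewrite S_eqH by (eapply RD_Hbar; eauto). apply Rbar_inf_ge.
  intros e (k & z & _ & _ & _ & ->). simpl. apply sumk_nonneg. auto. Qed.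

Lemma item1 H Hs0 Hs1 : RD H Hs0 Hs1 -> forall b x, x 0%nat = b -> peierls H (cst b) x = Finite 0.
Proof.
  intros RR b x Hx0. pose proof RR as (Hc & Hn & Hz & Hb & Hp).
  destruct (peierls_bounds H (cst b) x (fun n p => RD_Snn _ _ _ RR n p _ _)) as [U L].
  apply Rbar_le_antisym.
  - apply U. exists 0%nat. intros p nn _. rewrite S_eqH by (eapply RD_Hbar; eauto). apply Rbar_inf_lb.
    set (K := (nn + p + 1)%nat). set (z := fun i => if (i <? K)%nat then b else x (i - K)%nat).
    exists K, z. split; [lia|]. split.
    { intros i Hi; unfold z, cst; destruct (Nat.ltb_spec i K); [reflexivity|lia]. }
    split.
    { intros j Hj; unfold shiftn, z; destruct (Nat.ltb_spec (K+j) K); [lia|]. f_equal; lia. }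
    f_equal. symmetry. apply sumk_zero. intros i Hi. apply (RD_flat _ _ _ RR).
    unfold z. destruct (Nat.ltb_spec i K); [|lia]. destruct (Nat.ltb_spec (S i) K); auto.
    replace (S i - K)%nat with 0%nat by lia. auto.
  - apply L. exists 0%nat. intros p _. exists 0%nat. intros n _. apply (RD_Snn _ _ _ RR).
Qed.

Lemma item2 H Hs0 Hs1 : RD H Hs0 Hs1 -> forall b n x, (1 <= n)%nat -> (forall j, (j < n)%nat -> x j = negb b) ->
  x n = b -> peierls H (cst b) x = H_inf_from (Hsb Hs0 Hs1 b) n.
Proof.
  intros RR b n x Hn1 Hxj Hxn. pose proof RR as (Hc & Hnn & Hz & Hb & Hp).
  destruct (peierls_bounds H (cst b) x (fun n p => RD_Snn _ _ _ RR n p _ _)) as [U L].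
  apply Rbar_le_antisym.
  - apply Rbar_inf_ge. intros e (j & Hj & ->).
    apply U. exists 0%nat. intros p nn _. rewrite S_eqH by (eapply RD_Hbar; eauto). apply Rbar_inf_lb.
    set (K := (nn + p + 1)%nat). set (d := (j - n)%nat).
    set (z := fun i => if (i <? K)%nat then b else if (i <? K + d)%nat then negb b else x (i - (K + d))%nat).
    exists (K + d)%nat, z. split; [lia|]. split.
    { intros i Hi; unfold z, cst; destruct (Nat.ltb_spec i K); [reflexivity|lia]. }
    split.
    { intros i Hi; unfold shiftn, z; destruct (Nat.ltb_spec (K + d + i) K); [lia|].
      destruct (Nat.ltb_spec (K + d + i) (K + d)); [lia|]. f_equal; lia. }
    f_equal. rewrite (sumk_one _ _ (K - 1)%nat); [|intros i Hi Hne|lia].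
    + symmetry. apply (RD_blk _ _ _ RR); try lia.
      * unfold z. destruct (Nat.ltb_spec (K-1) K); auto; lia.
      * intros i Hi. unfold z. destruct (Nat.ltb_spec i K); [lia|].
        destruct (Nat.ltb_spec i (K + d)); auto. apply Hxj. lia.
      * unfold z. destruct (Nat.ltb_spec (K - 1 + j + 1) K); [lia|].
        destruct (Nat.ltb_spec (K - 1 + j + 1) (K + d)); [lia|].
        replace (K - 1 + j + 1 - (K + d))%nat with n by lia. auto.
    + apply (RD_flat _ _ _ RR). unfold z.
      destruct (Nat.ltb_spec i K); destruct (Nat.ltb_spec (S i) K); try lia; auto;
      destruct (Nat.ltb_spec i (K + d)); destruct (Nat.ltb_spec (S i) (K + d)); try lia; auto.
      replace (S i - (K + d))%nat with 0%nat by lia. symmetry. apply Hxj. lia.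
  - apply L. exists (S n). intros p Hp'. exists 0%nat. intros nn _.
    rewrite S_eqH by (eapply RD_Hbar; eauto). apply Rbar_inf_ge.
    intros e (k & z & Hk & A & Bg & ->).
    assert (Z0 : z 0%nat = b) by (apply (A 0%nat); lia).
    assert (Zk : forall i, (i < p)%nat -> z (k + i)%nat = x i) by (intros i Hi; apply (Bg i Hi)).
    assert (Zkk : z k = negb b). { rewrite <- (Nat.add_0_r k), Zk by lia. apply Hxj; lia. }
    destruct (last_before z b 0 k Z0) as (a & Ha & Za & Hi). simpl in Hi.
    assert (a <> k) by (intro Eak; rewrite Eak, Zkk in Za; destruct b; discriminate).
    set (jj := (k + n - 1 - a)%nat).
    assert (Hblk : H (shiftn a z) = Hsb Hs0 Hs1 b jj).
    { apply (RD_blk _ _ _ RR); try lia; auto.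
      - intros i Hi'. destruct (Nat.le_gt_cases i k). apply Hi; lia.
        replace i with (k + (i - k))%nat by lia. rewrite Zk by lia. apply Hxj; lia.
      - replace (a + jj + 1)%nat with (k + n)%nat by lia. rewrite Zk by lia. auto. }
    eapply Rbar_le_trans. apply Rbar_inf_lb. exists jj. split; [lia|reflexivity].
    simpl. rewrite <- Hblk. apply (sumk_ge1 (fun i => H (shiftn i z))); auto. lia.
Qed.

Lemma Hinfty_eq H Hs0 Hs1 : RD H Hs0 Hs1 -> forall b, H_infty (Hsb Hs0 Hs1 b) = Finite (H (w b)).
Proof.
  intros RR b. apply Lim_eq. intros eps Heps. destruct (RD_lim _ _ _ RR b eps Heps) as [N HN].
  exists N. intros n Hn. exists (Hsb Hs0 Hs1 b n). split; auto. apply HN; lia.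
Qed.

Lemma item2b H Hs0 Hs1 : RD H Hs0 Hs1 -> forall b, peierls H (cst b) (cst (negb b)) = Finite (H (w b)).
Proof.
  intros RR b. pose proof RR as (Hc & Hnn & Hz & Hb & Hp).
  destruct (peierls_bounds H (cst b) (cst (negb b)) (fun n p => RD_Snn _ _ _ RR n p _ _)) as [U L].
  apply Rbar_le_antisym.
  - apply eps_le. intros eps Heps. destruct (RD_lim _ _ _ RR b eps Heps) as [N HN].
    apply U. exists 0%nat. intros p nn _. rewrite S_eqH by (eapply RD_Hbar; eauto).
    set (j := (N + p + 1)%nat).
    eapply Rbar_le_trans with (Finite (Hsb Hs0 Hs1 b j)).
    2:{ simpl. specialize (HN j ltac:(unfold j; lia)). unfold R_dist in HN. apply Rabs_def2 in HN. lra. }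
    apply Rbar_inf_lb.
    set (K := (nn + p + 1)%nat).
    set (z := fun i => if (i <? K)%nat then b else if (i <? K + j)%nat then negb b else b).
    exists K, z. split; [lia|]. split.
    { intros i Hi; unfold z, cst; destruct (Nat.ltb_spec i K); [reflexivity|lia]. }
    split.
    { intros i Hi; unfold shiftn, z, cst; destruct (Nat.ltb_spec (K + i) K); [lia|].
      destruct (Nat.ltb_spec (K + i) (K + j)); auto. unfold j in *; lia. }
    f_equal. rewrite (sumk_one _ _ (K - 1)%nat); [|intros i Hi Hne|lia].
    + symmetry. apply (RD_blk _ _ _ RR); try lia.
      * unfold z. destruct (Nat.ltb_spec (K-1) K); auto; lia.
      * intros i Hi. unfold z. destruct (Nat.ltb_spec i K); [lia|].
        destruct (Nat.ltb_spec i (K + j)); auto. lia.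
      * unfold z. destruct (Nat.ltb_spec (K - 1 + j + 1) K); [lia|].
        destruct (Nat.ltb_spec (K - 1 + j + 1) (K + j)); [lia|]. auto.
    + apply (RD_flat _ _ _ RR). unfold z.
      destruct (Nat.ltb_spec i K); destruct (Nat.ltb_spec (S i) K); try lia; auto.
  - apply eps_ge. intros eps Heps. destruct (RD_lim _ _ _ RR b eps Heps) as [N HN].
    apply L. exists (S N). intros p Hp'. exists 0%nat. intros nn _.
    rewrite S_eqH by (eapply RD_Hbar; eauto). apply Rbar_inf_ge.
    intros e (k & z & Hk & A & Bg & ->).
    assert (Z0 : z 0%nat = b) by (apply (A 0%nat); lia).
    assert (Zk : forall i, (i < p)%nat -> z (k + i)%nat = negb b) by (intros i Hi; apply (Bg i Hi)).
    assert (Zkk : z k = negb b). { rewrite <- (Nat.add_0_r k), Zk by lia. auto. }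
    destruct (last_before z b 0 k Z0) as (a & Ha & Za & Hi). simpl in Hi.
    assert (a <> k) by (intro Eak; rewrite Eak, Zkk in Za; destruct b; discriminate).
    assert (Hge : H (w b) - eps <= H (shiftn a z)).
    { destruct (tail_bound _ _ _ RR b z a (k + p - 1 - a) ltac:(lia) Za) as [E|(jj & Hjj & E)].
      - intros i Hi'. destruct (Nat.le_gt_cases i k). apply Hi; lia.
        replace i with (k + (i - k))%nat by lia. apply Zk; lia.
      - lra.
      - rewrite E. specialize (HN jj ltac:(lia)). unfold R_dist in HN. apply Rabs_def2 in HN. lra. }
    simpl. eapply Rle_trans. apply Hge. apply (sumk_ge1 (fun i => H (shiftn i z))); auto. lia.
Qed.

Lemma Hmin_fin H Hs0 Hs1 : RD H Hs0 Hs1 -> forall b, exists hm, H_min (Hsb Hs0 Hs1 b) = Finite hm /\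
  (forall j, (1 <= j)%nat -> hm <= Hsb Hs0 Hs1 b j) /\
  (forall r, (forall j, (1 <= j)%nat -> r <= Hsb Hs0 Hs1 b j) -> r <= hm).
Proof.
  intros RR b. pose proof RR as (Hc & Hnn & Hz & Hb & Hp).
  assert (L0 : Rbar_le (Finite 0) (H_min (Hsb Hs0 Hs1 b))).
  { apply Rbar_inf_ge. intros e (n & Hn & ->). simpl. left. apply Hp; auto. }
  assert (L1 : Rbar_le (H_min (Hsb Hs0 Hs1 b)) (Finite (Hsb Hs0 Hs1 b 1))).
  { apply Rbar_inf_lb. exists 1%nat. split; auto. }
  destruct (H_min (Hsb Hs0 Hs1 b)) as [hm| |] eqn:E; simpl in L0, L1; try tauto.
  exists hm. split; auto. split.
  - intros j Hj. assert (Rbar_le (H_min (Hsb Hs0 Hs1 b)) (Finite (Hsb Hs0 Hs1 b j))).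
    { apply Rbar_inf_lb. exists j. split; auto. } rewrite E in H0. exact H0.
  - intros r Hr. assert (Rbar_le (Finite r) (H_min (Hsb Hs0 Hs1 b))).
    { apply Rbar_inf_ge. intros e (n & Hn & ->). simpl. apply Hr; auto. } rewrite E in H0. exact H0.
Qed.

Lemma item3_lb H Hs0 Hs1 : RD H Hs0 Hs1 -> forall b hm, (forall j, (1 <= j)%nat -> hm <= Hsb Hs0 Hs1 b j) ->
  forall x, x 0%nat = b -> x <> cst b ->
  Rbar_le (Finite (hm + H (w (negb b)))) (peierls H x (cst b)).
Proof.
  intros RR b hm Hhm x Hx0 Hxne. pose proof RR as (Hc & Hnn & Hz & Hb & Hp).
  destruct (peierls_bounds H x (cst b) (fun n p => RD_Snn _ _ _ RR n p _ _)) as [U L].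
  assert (Hex : exists i, x i = negb b).
  { apply NNPP. intro Hno. apply Hxne. apply functional_extensionality. intros i. unfold cst.
    destruct (bool_dec (x i) b); auto. exfalso. apply Hno. exists i. destruct (x i), b; simpl in *; congruence. }
  destruct Hex as [i0 Hi0].
  destruct (first_change x b 0 i0 Hx0 Hi0) as (m0 & Hm0 & Xm0 & Xb).
  apply eps_ge. intros eps Heps. destruct (RD_lim _ _ _ RR (negb b) eps Heps) as [N HN].
  apply L. exists (m0 + N + 1)%nat. intros p Hp'. exists 0%nat. intros nn _.
  rewrite S_eqH by (eapply RD_Hbar; eauto). apply Rbar_inf_ge.
  intros e (k & z & Hk & A & Bg & ->).
  assert (Zx : forall i, (i < p)%nat -> z i = x i) by (intros i Hi; apply (A i Hi)).
  assert (Zk : forall i, (i < p)%nat -> z (k + i)%nat = b) by (intros i Hi; apply (Bg i Hi)).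
  assert (Zm0 : z m0 = negb b) by (rewrite Zx by lia; auto).
  assert (Hmk : (m0 < k)%nat).
  { destruct (Nat.lt_ge_cases m0 k) as [|Hle]; auto. exfalso.
    replace m0 with (k + (m0 - k))%nat in Zm0 by lia. rewrite Zk in Zm0 by lia. destruct b; discriminate. }
  destruct (first_change z (negb b) m0 (k - m0) Zm0) as (e & He & Ze & Zi).
  { replace (m0 + (k - m0))%nat with (k + 0)%nat by lia. rewrite Zk by lia. rewrite negb_involutive; auto. }
  rewrite negb_involutive in Ze.
  assert (G1 : H (shiftn (m0 - 1) z) = Hsb Hs0 Hs1 b (e - m0)).
  { apply (RD_blk _ _ _ RR); try lia.
    - rewrite Zx by lia. apply Xb; lia.
    - intros i Hi. apply Zi; lia.
    - replace (m0 - 1 + (e - m0) + 1)%nat with e by lia. auto. }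
  destruct (last_before z (negb b) m0 (k - m0) Zm0) as (a1 & Ha1 & Za1 & Hi1).
  rewrite negb_involutive in Hi1.
  assert (a1 <> k).
  { intro Eak. rewrite Eak in Za1. replace k with (k + 0)%nat in Za1 by lia. rewrite Zk in Za1 by lia.
    destruct b; discriminate. }
  assert (G2 : H (w (negb b)) - eps <= H (shiftn a1 z)).
  { destruct (tail_bound _ _ _ RR (negb b) z a1 (k + p - 1 - a1) ltac:(lia) Za1) as [E|(jj & Hjj & E)].
    - intros i Hi'. rewrite negb_involutive. destruct (Nat.le_gt_cases i k). apply Hi1; lia.
      replace i with (k + (i - k))%nat by lia. apply Zk; lia.
    - lra.
    - rewrite E. specialize (HN jj ltac:(lia)). unfold R_dist in HN. apply Rabs_def2 in HN. lra. }
  assert (hm <= H (shiftn (m0 - 1) z)) by (rewrite G1; apply Hhm; lia).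
  simpl. eapply Rle_trans.
  2:{ apply (sumk_ge2 (fun i => H (shiftn i z)) k (m0 - 1) a1); auto; lia. }
  simpl. lra.
Qed.

Definition xm (b : bool) (m j : nat) : Sigma :=
  fun i => if (i <? m)%nat then b else if (i <? m + j)%nat then negb b else b.

Lemma item3_ub H Hs0 Hs1 : RD H Hs0 Hs1 -> forall b m j, (1 <= m)%nat -> (1 <= j)%nat ->
  Rbar_le (peierls H (xm b m j) (cst b)) (Finite (Hsb Hs0 Hs1 b j + H (w (negb b)))).
Proof.
  intros RR b m j Hm Hj. pose proof RR as (Hc & Hnn & Hz & Hb & Hp).
  destruct (peierls_bounds H (xm b m j) (cst b) (fun n p => RD_Snn _ _ _ RR n p _ _)) as [U L].
  apply U. exists 0%nat. intros p nn _. rewrite S_eqH by (eapply RD_Hbar; eauto). apply Rbar_inf_lb.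
  exists (nn + m + j)%nat, (xm b m j). split; [lia|]. split; [intros i Hi; auto|]. split.
  { intros i Hi. unfold shiftn, xm, cst. destruct (Nat.ltb_spec (nn + m + j + i) m); [lia|].
    destruct (Nat.ltb_spec (nn + m + j + i) (m + j)); auto; lia. }
  f_equal. rewrite (sumk_two _ _ (m - 1) (m + j - 1)); [|intros i Hi H1 H2|lia|lia|lia].
  - f_equal.
    + symmetry. apply (RD_blk _ _ _ RR); try lia; unfold xm.
      * destruct (Nat.ltb_spec (m - 1) m); auto; lia.
      * intros i Hi. destruct (Nat.ltb_spec i m); [lia|]. destruct (Nat.ltb_spec i (m + j)); auto; lia.
      * destruct (Nat.ltb_spec (m - 1 + j + 1) m); [lia|].
        destruct (Nat.ltb_spec (m - 1 + j + 1) (m + j)); auto; lia.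
    + symmetry. apply (RD_tail _ _ _ RR); unfold xm.
      * destruct (Nat.ltb_spec (m + j - 1) m); [lia|]. destruct (Nat.ltb_spec (m + j - 1) (m + j)); auto; lia.
      * intros i Hi. rewrite negb_involutive. destruct (Nat.ltb_spec i m); [lia|].
        destruct (Nat.ltb_spec i (m + j)); auto; lia.
  - apply (RD_flat _ _ _ RR). unfold xm.
    destruct (Nat.ltb_spec i m); destruct (Nat.ltb_spec (S i) m); try lia; auto;
    destruct (Nat.ltb_spec i (m + j)); destruct (Nat.ltb_spec (S i) (m + j)); try lia; auto.
Qed.

Lemma item3 H Hs0 Hs1 : RD H Hs0 Hs1 -> forall b,
  liminf_punct (fun x => peierls H x (cst b)) (cst b) =
  Rbar_plus (H_min (Hsb Hs0 Hs1 b)) (H_infty (Hsb Hs0 Hs1 (negb b))).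
Proof.
  intros RR b. destruct (Hmin_fin _ _ _ RR b) as (hm & Ehm & Hhm1 & Hhm2).
  rewrite Ehm, (Hinfty_eq _ _ _ RR). simpl.
  apply Rbar_sup_eq. split.
  - intros r (m & ->).
    set (I := Rbar_inf _).
    assert (HI : forall j, (1 <= j)%nat -> Rbar_le I (Finite (Hsb Hs0 Hs1 b j + H (w (negb b))))).
    { intros j Hj. eapply Rbar_le_trans. 2: apply (item3_ub _ _ _ RR b (S m) j); lia.
      apply Rbar_inf_lb. exists (xm b (S m) j). split; [|split; [|reflexivity]].
      - intros i Hi. unfold xm, cst. destruct (Nat.ltb_spec i (S m)); auto; lia.
      - intro E. assert (E2 := f_equal (fun f => f (S m)) E). simpl in E2. unfold xm, cst in E2.
        rewrite Nat.ltb_irrefl in E2. destruct (Nat.ltb_spec (S m) (S m + j)); [|lia].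
        destruct b; discriminate. }
    destruct I as [r| |] eqn:EI.
    + simpl. assert (r - H (w (negb b)) <= hm); [|lra]. apply Hhm2. intros j Hj.
      specialize (HI j Hj). simpl in HI. lra.
    + specialize (HI 1%nat (le_n _)). simpl in HI. exact HI.
    + simpl; auto.
  - intros B HB. eapply Rbar_le_trans. 2: apply HB; exists 1%nat; reflexivity.
    apply Rbar_inf_ge. intros s (x & Ax & Hxne & ->).
    apply (item3_lb _ _ _ RR b hm Hhm1 x); auto; apply Ax; lia.
Qed.

Theorem proposition3p3 (H : Sigma -> R) (Hs0 Hs1 : nat -> R) :
  reduced_double_well H Hs0 Hs1 ->
  (* 1 *)
  (forall x, x 0%nat = false -> peierls H zeros x = Finite 0) /\
  (* 2 *)
  (forall n x, (1 <= n)%nat -> (forall j, (j < n)%nat -> x j = true) -> x n = false ->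
      peierls H zeros x = H_inf_from Hs0 n) /\
  peierls H zeros ones = H_infty Hs0 /\
  (* 3 *)
  liminf_punct (fun x => peierls H x zeros) zeros = Rbar_plus (H_min Hs0) (H_infty Hs1) /\
  (* 4 *)
  (forall x, x 0%nat = true -> peierls H ones x = Finite 0) /\
  (* 5 *)
  (forall n x, (1 <= n)%nat -> (forall j, (j < n)%nat -> x j = false) -> x n = true ->
      peierls H ones x = H_inf_from Hs1 n) /\
  peierls H ones zeros = H_infty Hs1 /\
  (* 6 *)
  liminf_punct (fun x => peierls H x ones) ones = Rbar_plus (H_min Hs1) (H_infty Hs0).
Proof.
  intros Hr. destruct Hr as (Hc & Hn & _ & Hz & H0 & H1 & P0 & P1 & _ & _).
  assert (RR : RD H Hs0 Hs1).
  { split; [auto|split; [auto|split; [auto|split]]].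
    - intros b n x; destruct b; simpl; [apply H1|apply H0].
    - intros b n; destruct b; simpl; auto. }
  split; [exact (item1 _ _ _ RR false)|].
  split; [exact (item2 _ _ _ RR false)|].
  split; [change (peierls H (cst false) (cst (negb false)) = H_infty (Hsb Hs0 Hs1 false)); rewrite (Hinfty_eq _ _ _ RR false); exact (item2b _ _ _ RR false)|].
  split; [exact (item3 _ _ _ RR false)|].
  split; [exact (item1 _ _ _ RR true)|].
  split; [exact (item2 _ _ _ RR true)|].
  split; [change (peierls H (cst true) (cst (negb true)) = H_infty (Hsb Hs0 Hs1 true)); rewrite (Hinfty_eq _ _ _ RR true); exact (item2b _ _ _ RR true)|].
  exact (item3 _ _ _ RR true).
Qed.
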